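(* Let $\Gamma\in\mathbb{R}^{n\times m}$ and let $R:\mathbb{R}^n_{\ge0}\to\mathbb{R}^m$ be locally Lipschitz such that $\dot S=\Gamma R(S)$ leaves $\mathbb{R}^n_{\ge0}$ invariant and is forward complete. For $\sigma\in\mathbb{R}^n_{\ge0}$ consider $\dot x=f_\sigma(x):=R(\sigma+\Gamma x)$ on $X_\sigma=\{x\in\mathbb{R}^m:\sigma+\Gamma x\ge0\}$. Suppose that: (1) $\Gamma$ has rank $m-1$, with kernel spanned by a unit vector all of whose entries are positive; (2) every solution of $\dot S=\Gamma R(S)$ in $\mathbb{R}^n_{\ge0}$ is bounded; (3) $\sigma\in\mathbb{R}^n_{\ge0}$ is such that $\dot x=f_\sigma(x)$ on $X_\sigma$ is strongly monotone with respect to the order induced by the cone $\mathbb{R}^m_{\ge0}$ (i.e. if $\xi_1\ge\xi_2$, $\xi_1\ne\xi_2$, then every component of $\varphi_t(\xi_1)-\varphi_t(\xi_2)$ is strictly positive for all $t>0$). Then there is $\zeta=\zeta_\sigma\in\mathbb{R}^n_{\ge0}$ such that for each $\rho\in\mathbb{R}^n_{\ge0}$ with $\rho-\sigma\in\operatorname{Image}(\Gamma)$, the solution $S$ of $\dot S=\Gamma R(S)$ with $S(0)=\rho$ satisfies $S(t)\to\zeta$ as $t\to\infty$.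
   Context: Inequalities between vectors are componentwise; $\varphi_t$ denotes the flow of $\dot x=f_\sigma(x)$ on $X_\sigma$. *)

(* Defs.v *)
From HB Require Import structures.
From mathcomp Require Import all_boot all_order all_algebra.
From mathcomp Require Import all_classical all_reals all_analysis.
Set Implicit Arguments. Unset Strict Implicit. Unset Printing Implicit Defensive.
Import Order.TTheory GRing.Theory Num.Theory.
Import numFieldNormedType.Exports.
Local Open Scope classical_set_scope.
Local Open Scope ring_scope.

Definition vnonneg (R : realType) (k : nat) (v : 'cV[R]_k) : Prop :=
  forall i : 'I_k, 0 <= v i ord0.

(* the l1 norm (any norm on R^k is equivalent) *)
Definition norm1 (R : realType) (k : nat) (v : 'cV[R]_k) : R :=
  \sum_(i < k) `|v i ord0|.

Definition norm2sq (R : realType) (k : nat) (v : 'cV[R]_k) : R :=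
  \sum_(i < k) (v i ord0) ^+ 2.

Definition loc_lipschitz_on (R : realType) (k l : nat)
    (D : set 'cV[R]_k) (F : 'cV[R]_k -> 'cV[R]_l) : Prop :=
  forall p, D p -> exists r : R, exists L : R, 0 < r /\
    forall y z, D y -> D z -> norm1 (y - p) < r -> norm1 (z - p) < r ->
      norm1 (F y - F z) <= L * norm1 (y - z).

Definition is_fwd_solution (R : realType) (k : nat)
    (F : 'cV[R]_k -> 'cV[R]_k) (D : set 'cV[R]_k) (x : R -> 'cV[R]_k) : Prop :=
  (forall t : R, 0 <= t -> D (x t)) /\
  (forall t : R, 0 < t -> forall i : 'I_k,
      is_derive t (1 : R) (fun s : R => x s i ord0) (F (x t) i ord0)) /\
  (forall i : 'I_k, (fun s : R => x s i ord0) @ 0^'+ --> x 0 i ord0).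

(* Main.v *)
Require Import Defs.
From HB Require Import structures.
From mathcomp Require Import all_boot all_order all_algebra.
From mathcomp Require Import all_classical all_reals all_analysis.
From mathcomp Require Import ring lra.
Import Order.TTheory GRing.Theory Num.Theory.
Import numFieldNormedType.Exports.
Local Open Scope classical_set_scope.
Local Open Scope ring_scope.
Set Implicit Arguments. Unset Strict Implicit. Unset Printing Implicit Defensive.
Definition imx (R : realType) k (v a : 'cV[R]_k.+1) : 'I_k.+1 :=
  Order.arg_max ord0 xpredT (fun i => a i ord0 / v i ord0).
Definition imn (R : realType) k (v a : 'cV[R]_k.+1) : 'I_k.+1 :=
  Order.arg_min ord0 xpredT (fun i => a i ord0 / v i ord0).
Definition mxr (R : realType) k (v a : 'cV[R]_k.+1) : R :=
  a (imx v a) ord0 / v (imx v a) ord0.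
Definition mnr (R : realType) k (v a : 'cV[R]_k.+1) : R :=
  a (imn v a) ord0 / v (imn v a) ord0.
Definition gap (R : realType) k (v a : 'cV[R]_k.+1) : R := mxr v a - mnr v a.
Definition W (R : realType) k (v a : 'cV[R]_k.+1) (d : R) : Prop :=
  exists c, forall i, c * v i ord0 <= a i ord0 <= (c + d) * v i ord0.

Lemma mxr_ge (R : realType) k (v a : 'cV[R]_k.+1) i :
  a i ord0 / v i ord0 <= mxr v a.
Proof. by rewrite /mxr /imx; case: arg_maxP => // j _ /(_ i isT). Qed.
Lemma mnr_le (R : realType) k (v a : 'cV[R]_k.+1) i :
  mnr v a <= a i ord0 / v i ord0.
Proof. by rewrite /mnr /imn; case: arg_minP => // j _ /(_ i isT). Qed.
Lemma mxr_ex (R : realType) k (v a : 'cV[R]_k.+1) :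
  exists i, mxr v a = a i ord0 / v i ord0.
Proof. by exists (imx v a). Qed.
Lemma mnr_ex (R : realType) k (v a : 'cV[R]_k.+1) :
  exists i, mnr v a = a i ord0 / v i ord0.
Proof. by exists (imn v a). Qed.

Section A.
Variables (R : realType) (k : nat) (v : 'cV[R]_k.+1).
Hypothesis vpos : forall i, 0 < v i ord0.

Lemma ratio_le (x c : R) i : (x / v i ord0 <= c) = (x <= c * v i ord0).
Proof. by rewrite ler_pdivrMr. Qed.
Lemma ratio_ge (x c : R) i : (c <= x / v i ord0) = (c * v i ord0 <= x).
Proof. by rewrite ler_pdivlMr. Qed.

Lemma gapW a : W v a (gap v a).
Proof.
exists (mnr v a) => i; rewrite /gap addrC subrK.
by rewrite -ratio_le -ratio_ge mxr_ge mnr_le.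
Qed.

Lemma W_gap a d : W v a d -> gap v a <= d.
Proof.
case=> c H; rewrite /gap; have [i ->] := mxr_ex v a; have [j ->] := mnr_ex v a.
have /andP[_ h1] := H i; have /andP[h2 _] := H j.
rewrite -ratio_le in h1; rewrite -ratio_ge in h2.
by rewrite lerBlDr (le_trans h1) // addrC lerD2l.
Qed.

Lemma gap_ge0 a : 0 <= gap v a.
Proof. by rewrite subr_ge0 (le_trans (mnr_le v a ord0)) // mxr_ge. Qed.

Lemma gap0 a : gap v a <= 0 -> a = mnr v a *: v.
Proof.
move=> g0; apply/matrixP => i j; rewrite (ord1 j) mxE.
have h1 := mxr_ge v a i; have h2 := mnr_le v a i.
have e : a i ord0 / v i ord0 = mnr v a.
  by apply/eqP; rewrite eq_le h2 andbT (le_trans h1) // -subr_le0.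
by rewrite -e mulfVK // gt_eqF.
Qed.

Lemma W_mono a d d' : W v a d -> d <= d' -> W v a d'.
Proof.
case=> c H dd; exists c => i; have /andP[h1 h2] := H i.
by rewrite h1 (le_trans h2) // ler_pM2r // lerD2l.
Qed.

Lemma W_add a b d1 d2 : W v a d1 -> W v b d2 -> W v (a + b) (d1 + d2).
Proof.
case=> c1 H1 [c2 H2]; exists (c1 + c2) => i.
have /andP[h1 h2] := H1 i; have /andP[h3 h4] := H2 i.
rewrite !mxE mulrDl lerD //= (le_trans (lerD h2 h4)) //.
by rewrite -mulrDl addrACA.
Qed.

Lemma W_opp a d : W v a d -> W v (- a) d.
Proof.
case=> c H; exists (- c - d) => i; have /andP[h1 h2] := H i.
rewrite !mxE subrK mulNr lerN2 h1 andbT.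
by rewrite -opprD mulNr lerN2.
Qed.

Lemma W_scale c : W v (c *: v) 0.
Proof. by exists c => i; rewrite addr0 mxE lexx. Qed.

Lemma W_shift a c d : W v a d -> W v (a + c *: v) d.
Proof. by move=> h; rewrite -[d]addr0; apply: W_add => //; apply: W_scale. Qed.

Lemma W_shift_inv a c d : W v (a + c *: v) d -> W v a d.
Proof. by move=> /(W_shift (- c)); rewrite -addrA -scalerDl subrr scale0r addr0. Qed.

Lemma gap_shift a c : gap v (a + c *: v) = gap v a.
Proof.
apply/eqP; rewrite eq_le; apply/andP; split; apply: W_gap.
  exact/W_shift/gapW.
exact/(W_shift_inv (c := c))/gapW.
Qed.

End A.
Section B.
Variables (R : realType) (k : nat) (F : 'cV[R]_k.+1 -> 'cV[R]_k.+1)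
  (D : set 'cV[R]_k.+1) (v : 'cV[R]_k.+1).
Hypothesis vpos : forall i, 0 < v i ord0.
Hypothesis HFv : forall x c, F (x + c *: v) = F x.
Hypothesis HDv : forall x c, D x -> D (x + c *: v).
Hypothesis Hmono : forall x1 x2 : R -> 'cV[R]_k.+1,
  is_fwd_solution F D x1 -> is_fwd_solution F D x2 ->
  vnonneg (x1 0 - x2 0) -> x1 0 <> x2 0 ->
  forall t : R, 0 < t -> forall i, x2 t i ord0 < x1 t i ord0.

Local Notation sol := (is_fwd_solution F D).

Lemma sol_trans x c : sol x -> sol (fun t => x t + c *: v).
Proof.
case=> HD [Hd Hc]; split; [|split].
- by move=> t t0; apply: HDv; apply: HD.
- move=> t t0 i.
  have -> : (fun s => (x s + c *: v) i ord0) =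
            (fun s => x s i ord0) + cst (c * v i ord0).
    by apply/funext => s; rewrite !mxE.
  rewrite HFv -[X in is_derive _ _ _ X]addr0.
  exact: is_deriveD (Hd t t0 i) (is_derive_cst _ _ _).
- move=> i; rewrite !mxE.
  have -> : (fun s => (x s + c *: v) i ord0) =
            (fun s => x s i ord0 + c * v i ord0).
    by apply/funext => s; rewrite !mxE.
  by apply: cvgD; [apply: Hc|apply: cvg_cst].
Qed.

Lemma sol_shift x h : 0 <= h -> sol x -> sol (fun t => x (t + h)).
Proof.
move=> h0 [HD [Hd Hc]]; split; [|split].
- by move=> t t0; apply: HD; rewrite addr_ge0.
- move=> t t0 i.
  have dg : is_derive t (1:R) (fun s : R => s + h) 1.
    by rewrite -[X in is_derive _ _ _ X]addr0; apply: is_deriveD.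
  have := @is_derive1_comp R (fun s => x s i ord0) (fun s => s + h) t _ _
     (Hd (t + h) (ltr_wpDr h0 t0) i) dg.
  by rewrite mulr1.
- move=> i; have [->|hp] := eqVneq h 0.
    have -> : (fun s => x (s + 0) i ord0) = (fun s => x s i ord0).
      by apply/funext => s; rewrite addr0.
    by rewrite add0r; apply: Hc.
  have hpos : 0 < h by rewrite lt_def hp h0.
  apply: cvg_at_right_filter.
  have c1 : {for h, continuous (fun s => x s i ord0)}.
    apply/differentiable_continuous/derivable1_diffP.
    by case: (Hd h hpos i).
  have c2 : {for 0, continuous (fun s : R => s + h)}.
    by apply: cvgD; [apply: cvg_id|apply: cvg_cst].
  have := continuous_comp c2; rewrite /= add0r => /(_ _ _ c1).
  have E : (fun s => x s i ord0) ((fun s => s + h) 0) = x h i ord0.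
    by rewrite add0r.
  by rewrite -E.
Qed.

Lemma cmp2 x1 x2 c : sol x1 -> sol x2 ->
  (forall i, x1 0 i ord0 <= x2 0 i ord0 + c * v i ord0) ->
  x1 0 <> x2 0 + c *: v ->
  forall t, 0 < t -> forall i, x1 t i ord0 < x2 t i ord0 + c * v i ord0.
Proof.
move=> s1 s2 H0 ne t t0 i.
have key : x1 t i ord0 < (x2 t + c *: v) i ord0.
  apply: (@Hmono (fun t => x2 t + c *: v) x1 (sol_trans c s2) s1) => //.
  - by move=> j; rewrite !mxE subr_ge0 H0.
  - by move=> e; apply: ne.
by rewrite !mxE in key.
Qed.

Lemma cmp1 x1 x2 c : sol x1 -> sol x2 ->
  (forall i, x1 0 i ord0 <= x2 0 i ord0 + c * v i ord0) ->
  forall t, 0 <= t -> forall i, x1 t i ord0 <= x2 t i ord0 + c * v i ord0.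
Proof.
move=> s1 s2 H0 t; rewrite le_eqVlt => /predU1P[<-//|t0] i.
apply/ler_addgt0Pr => e e0.
pose eps := e / v i ord0.
have eps0 : 0 < eps by rewrite divr_gt0.
have H1 : forall j, x1 0 j ord0 <= x2 0 j ord0 + (c + eps) * v j ord0.
  move=> j; apply: (le_trans (H0 j)); rewrite lerD2l ler_pM2r //.
  by rewrite lerDl ltW.
have ne : x1 0 <> x2 0 + (c + eps) *: v.
  move=> E; have := H0 i; rewrite E !mxE lerD2l mulrDl gerDl.
  by rewrite leNgt mulr_gt0.
have := cmp2 s1 s2 H1 ne t0 i.
by rewrite mulrDl /eps divfK ?gt_eqF // addrA => /ltW.
Qed.

Lemma W_sol x1 x2 d : sol x1 -> sol x2 -> W v (x1 0 - x2 0) d ->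
  forall t, 0 <= t -> W v (x1 t - x2 t) d.
Proof.
move=> s1 s2 [c H] t t0; exists c => i.
have /andP[h1 h2] := H i; rewrite !mxE in h1 h2.
rewrite !mxE; apply/andP; split.
- have P : forall j, x2 0 j ord0 <= x1 0 j ord0 + (- c) * v j ord0.
    by move=> j; have /andP[+ _] := H j; rewrite !mxE mulNr lerBrDr addrC -lerBrDr.
  have := @cmp1 x2 x1 (- c) s2 s1 P t t0 i.
  by rewrite mulNr; lra.
- have P : forall j, x1 0 j ord0 <= x2 0 j ord0 + (c + d) * v j ord0.
    by move=> j; have /andP[_ +] := H j; rewrite !mxE lerBlDl addrC.
  have := @cmp1 x1 x2 (c + d) s1 s2 P t t0 i.
  by lra.
Qed.

Lemma gap_strict x1 x2 : sol x1 -> sol x2 ->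
  (forall c, x1 0 - x2 0 <> c *: v) ->
  forall t, 0 < t -> gap v (x1 t - x2 t) < gap v (x1 0 - x2 0).
Proof.
move=> s1 s2 nsp t t0.
set a := x1 0 - x2 0.
have up : forall i, x1 t i ord0 < x2 t i ord0 + mxr v a * v i ord0.
  apply: cmp2 => //.
  - move=> j; have := mxr_ge v a j; rewrite ler_pdivrMr // !mxE.
    by rewrite lerBlDl addrC.
  - by move=> Eq; apply: (nsp (mxr v a)); rewrite Eq addrAC subrr add0r.
have lo : forall i, x2 t i ord0 < x1 t i ord0 + (- mnr v a) * v i ord0.
  apply: cmp2 => //.
  - move=> j; have := mnr_le v a j; rewrite ler_pdivlMr // !mxE.
    by rewrite mulNr; lra.
  - move=> Eq; apply: (nsp (mnr v a)).
    by rewrite Eq opprD addrA subrr add0r scaleNr opprK.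
rewrite /gap; have [i ->] := mxr_ex v (x1 t - x2 t).
have [j ->] := mnr_ex v (x1 t - x2 t).
have h1 : (x1 t - x2 t) i ord0 / v i ord0 < mxr v a.
  by rewrite ltr_pdivrMr // !mxE; have := up i; lra.
have h2 : mnr v a < (x1 t - x2 t) j ord0 / v j ord0.
  by rewrite ltr_pdivlMr // !mxE; have := lo j; rewrite mulNr; lra.
by rewrite ltrB.
Qed.

Lemma gap_scale c : gap v (c *: v) = 0.
Proof.
by apply/eqP; rewrite eq_le gap_ge0 // andbT; apply: W_gap => //; apply: W_scale.
Qed.

Definition clusterW (x : R -> 'cV[R]_k.+1) q := forall e, 0 < e -> forall T,
  exists t, T <= t /\ 0 <= t /\ W v (x t - q) e.

Lemma travel x q y : sol x -> sol y -> y 0 = q -> clusterW x q ->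
  forall h, 0 <= h -> exists lam, y h = q + lam *: v.
Proof.
move=> sx sy y0 cl h h0.
suff g0 : gap v (y h - q) <= 0.
  exists (mnr v (y h - q)); rewrite -(gap0 vpos g0).
  by rewrite addrC subrK.
rewrite leNgt; apply/negP => g0pos.
have hpos : 0 < h.
  rewrite lt_def h0 andbT; apply/eqP => h0'; move: g0pos.
  by rewrite h0' y0 subrr -(scale0r v) gap_scale ltxx.
set g0 := gap v (y h - q) in g0pos.
have syh := sol_shift (ltW hpos) sy.
have nsp : forall c, y (0 + h) - y 0 <> c *: v.
  move=> c Eq; move: g0pos; rewrite /g0 -y0 -[h]add0r Eq gap_scale.
  by rewrite ltxx.
have := gap_strict syh sy nsp ltr01.
rewrite /= add0r y0 -/g0 => g1lt.
set g1 := gap v (y (1 + h) - y 1) in g1lt.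
pose e := (g0 - g1) / 8.
have e0 : 0 < e by rewrite divr_gt0 // subr_gt0.
have [t0 [_ [t00 W0]]] := cl e e0 0.
have sxt0 := sol_shift t00 sx.
have Wxy : forall s, 0 <= s -> W v (x (s + t0) - y s) e.
  apply: (W_sol sxt0 sy); by rewrite /= add0r y0.
have W1 : W v (x (1 + h + t0) - x (1 + t0)) (e + e + g1).
  have -> : x (1 + h + t0) - x (1 + t0) =
     (x (1 + h + t0) - y (1 + h)) + (- (x (1 + t0) - y 1)) + (y (1 + h) - y 1).
    by apply/matrixP => i j; rewrite !mxE; ring.
  apply: W_add => //; last exact: gapW.
  apply: W_add => //; first by apply: Wxy; rewrite addr_ge0 ?ler01.
  by apply: W_opp => //; apply: Wxy; rewrite ler01.
have s1 := sol_shift (_ : 0 <= 1 + h + t0) sx.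
have s2 := sol_shift (_ : 0 <= 1 + t0) sx.
have W2 : forall s, 0 <= s -> W v (x (s + (1 + h + t0)) - x (s + (1 + t0))) (e + e + g1).
  apply: (W_sol (s1 _) (s2 _)).
  - by rewrite !addr_ge0 ?ler01.
  - by rewrite !addr_ge0 ?ler01.
  by rewrite /= !add0r.
have [t1 [t1ge [t10 W3]]] := cl e e0 (1 + t0).
have st1 := sol_shift t10 sx.
have W4 : W v (x (t1 + h) - y h) e.
  by rewrite [t1 + h]addrC; apply: (W_sol st1 sy) => //; rewrite /= add0r y0.
have W5 : W v (x (t1 + h) - x t1) (e + e + g1).
  have := W2 (t1 - (1 + t0)); rewrite subr_ge0 => /(_ t1ge).
  have -> : t1 - (1 + t0) + (1 + h + t0) = t1 + h by ring.
  by have -> : t1 - (1 + t0) + (1 + t0) = t1 by ring.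
have W6 : W v (y h - q) (e + e + (e + e + g1)).
  have -> : y h - q = (x t1 - q) + (- (x (t1 + h) - y h)) + (x (t1 + h) - x t1).
    by apply/matrixP => i j; rewrite !mxE; ring.
  apply: W_add => //; apply: W_add => //; exact: W_opp.
have := W_gap vpos W6; rewrite -/g0 /e => H.
have : g0 <= g1 + (g0 - g1) / 2 by lra.
lra.
Qed.

Lemma conv x q y : sol x -> sol y -> y 0 = q -> clusterW x q ->
  (forall h, 0 <= h -> exists lam, y h = q + lam *: v) ->
  forall e, 0 < e -> exists T, forall t, T <= t -> W v (x t - q) e.
Proof.
move=> sx sy y0 cl tr e e0.
have [t0 [_ [t00 W0]]] := cl e e0 0.
have sxt0 := sol_shift t00 sx.
have Wxy : forall s, 0 <= s -> W v (x (s + t0) - y s) e.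
  apply: (W_sol sxt0 sy); by rewrite /= add0r y0.
exists t0 => t tt0.
have := Wxy (t - t0); rewrite subr_ge0 => /(_ tt0); rewrite subrK.
have [lam ->] : exists lam, y (t - t0) = q + lam *: v.
  by apply: tr; rewrite subr_ge0.
rewrite opprD addrA => /(W_shift lam).
by rewrite subrK.
Qed.

Lemma same_class q q' y y' : sol y -> sol y' -> y 0 = q -> y' 0 = q' ->
  (exists lam, y 1 = q + lam *: v) -> (exists lam, y' 1 = q' + lam *: v) ->
  exists c, q - q' = c *: v.
Proof.
move=> sy sy' y0 y0' [l1 e1] [l2 e2].
case: (pselect (exists c, q - q' = c *: v)) => // nsp; exfalso.
have nsp' : forall c, y 0 - y' 0 <> c *: v.
  by move=> c E; apply: nsp; exists c; rewrite -y0 -y0'.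
have := gap_strict sy sy' nsp' ltr01.
have -> : y 1 - y' 1 = (q - q') + (l1 - l2) *: v.
  by rewrite e1 e2 scalerBl; apply/matrixP => i j; rewrite !mxE; ring.
by rewrite gap_shift // y0 y0' ltxx.
Qed.
End B.
Lemma ball_rV (R : realType) k (r u : 'rV[R]_k) e : ball r e u -> forall i, `|r ord0 i - u ord0 i| < e.
Proof.
move=> b i. move: b. rewrite /ball /= /mx_ball => -[_ /(_ ord0 i)].
by rewrite /ball /=.
Qed.

Lemma cluster_ex (R : realType) k (z : R -> 'cV[R]_k) M :
  (forall t, 0 <= t -> forall i, `|z t i ord0| <= M) ->
  exists q : 'cV[R]_k, forall e, 0 < e -> forall T, exists t,
    T <= t /\ 0 <= t /\ forall i, `|z t i ord0 - q i ord0| < e.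
Proof.
move=> zb.
pose K := [set r : 'rV[R]_k | forall i, `[(- M), M]%classic (r ord0 i)].
have cK : compact K.
  apply: (@rV_compact _ _ (fun=> `[(- M), M]%classic)).
  by move=> _; apply: segment_compact.
pose F := (fun t => (z t)^T) @ (@pinfty_nbhs R).
have FK : F K.
  rewrite /F /=; near=> t => i /=; rewrite mxE in_itv /= -ler_norml.
  by apply: zb; near: t; apply: nbhs_pinfty_ge; rewrite num_real.
have PF : ProperFilter F by apply: fmap_proper_filter; exact: _.
have [r [Kr clr]] := cK F PF FK.
exists r^T => e e0 T.
pose A := [set u : 'rV[R]_k | exists t, Num.max T 0 <= t /\ u = (z t)^T].
have FA : F A.
  rewrite /F /=; apply: filterS (nbhs_pinfty_ge (num_real (Num.max T 0))).
  by move=> t tT; exists t.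
have [u [[t [tT ->]] bu]] := clr A _ FA (nbhsx_ballx r e e0).
exists t; split; [|split].
- by apply: le_trans tT; rewrite le_max lexx.
- by apply: le_trans tT; rewrite le_max lexx orbT.
- move=> i; have := ball_rV bu i; rewrite !mxE distrC.
  by [].
Unshelve. all: by end_near.
Qed.
Lemma le_sum1 (R : realType) (I : finType) (f : I -> R) i :
  (forall j, 0 <= f j) -> f i <= \sum_j f j.
Proof.
by move=> f0; rewrite (bigD1 i) //= lerDl sumr_ge0.
Qed.

Lemma norm1_ge0 (R : realType) k (a : 'cV[R]_k) : 0 <= norm1 a.
Proof. by rewrite /norm1 sumr_ge0. Qed.

Lemma entry_le_norm1 (R : realType) k (a : 'cV[R]_k) i : `|a i ord0| <= norm1 a.
Proof. exact: (@le_sum1 _ _ (fun j => `|a j ord0|)). Qed.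

Lemma norm1_sym (R : realType) k (a b : 'cV[R]_k) : norm1 (a - b) = norm1 (b - a).
Proof. by apply: eq_bigr => i _; rewrite !mxE distrC. Qed.

Lemma cvg_sumI (R : realType) T (F : set_system T) (FF : Filter F) m
  (f : 'I_m -> T -> R) (l : 'I_m -> R) :
  (forall j, f j @ F --> l j) -> (fun t => \sum_j f j t) @ F --> \sum_j l j.
Proof.
move=> H; have -> : (fun t => \sum_j f j t) = \sum_j f j by rewrite fct_sumE.
by elim/big_ind2 : _ => // [|g1 c1 g2 c2 h1 h2]; [exact: cvg_cst|exact: cvgD].
Qed.

Lemma Lip_comp (R : realType) n m (Rf : 'cV[R]_n -> 'cV[R]_m)
  T (F : set_system T) (FF : Filter F) (S : T -> 'cV[R]_n) (p : 'cV[R]_n) :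
  loc_lipschitz_on (@vnonneg R n) Rf -> vnonneg p ->
  (\forall t \near F, vnonneg (S t)) ->
  (forall i, (fun t => S t i ord0) @ F --> p i ord0) ->
  forall j, (fun t => Rf (S t) j ord0) @ F --> Rf p j ord0.
Proof.
move=> HL pD SD Sc j.
have [r [L [r0 HLp]]] := HL p pD.
pose L' := `|L| + 1.
have L'0 : 0 < L' by rewrite /L' ltr_wpDl.
apply/cvgrPdist_lt => e e0.
pose d := Num.min r (e / L') / (n%:R + 1).
have d0 : 0 < d by rewrite divr_gt0 ?lt_min ?r0 ?divr_gt0 // ltr_wpDl.
have Hd : forall i, \forall t \near F, `|p i ord0 - S t i ord0| < d.
  by move=> i; apply: (cvgrPdist_lt _ _).1 (Sc i) d d0.
near=> t.
have St : vnonneg (S t) by near: t.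
have Hi : forall i, `|p i ord0 - S t i ord0| < d.
  by near: t; apply: filter_forall.
have nS : norm1 (S t - p) < Num.min r (e / L').
  apply: (@le_lt_trans _ _ (n%:R * d)).
    rewrite /norm1 -[n in n%:R]card_ord -sum1_card natr_sum mulr_suml.
    apply: ler_sum => i _; rewrite mul1r !mxE distrC; exact: ltW.
  have m0 : 0 < Num.min r (e / L') by rewrite lt_min r0 divr_gt0.
  rewrite /d; set mm := Num.min r (e / L') in m0 *.
  rewrite mulrA ltr_pdivrMr ?ltr_wpDl //; nra.
have np : norm1 (p - p) = 0.
  by rewrite /norm1 big1 // => i _; rewrite !mxE subrr normr0.
have := HLp p (S t) pD St; rewrite np => /(_ r0).
have mr : Num.min r (e / L') <= r by rewrite ge_min lexx.
move=> /(_ (lt_le_trans nS mr)) H.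
have E1 : `|Rf p j ord0 - Rf (S t) j ord0| <= norm1 (Rf p - Rf (S t)).
  by have := entry_le_norm1 (Rf p - Rf (S t)) j; rewrite !mxE.
apply: (le_lt_trans E1); apply: (le_lt_trans H).
have nS' : norm1 (p - S t) < e / L'.
  by rewrite norm1_sym (lt_le_trans nS) // ge_min lexx orbT.
have nn := norm1_ge0 (p - S t).
have LL : L * norm1 (p - S t) <= L' * norm1 (p - S t).
  by rewrite ler_wpM2r // /L' (le_trans (ler_norm L)) // lerDl.
apply: (le_lt_trans LL); rewrite mulrC -ltr_pdivlMr //.
Unshelve. all: by end_near.
Qed.

Lemma const0 (R : realType) (f : R -> R) :
  (forall t : R, 0 < t -> is_derive t (1:R) f 0) -> f @ 0^'+ --> f 0 ->
  forall t : R, 0 <= t -> f t = f 0.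
Proof.
move=> Hd Hc.
have C : forall a b, 0 < a -> a <= b -> f b = f a.
  move=> a b a0 ab.
  have [c _] : exists2 c, c \in `[a, b] & f b - f a = (fun _ => 0) c * (b - a).
    apply: (@MVT_segment R f (fun _ => 0) a b ab).
  - move=> x; rewrite in_itv /= => /andP[ax _]; apply: Hd.
    exact: lt_trans ax.
  - apply: continuous_in_subspaceT => x; rewrite inE /= in_itv /= => /andP[ax _].
    apply/differentiable_continuous/derivable1_diffP.
    by case: (Hd x (lt_le_trans a0 ax)).
  by rewrite mul0r => /eqP; rewrite subr_eq0 => /eqP.
have lim1 : f @ 0^'+ --> f 1.
  apply: cvg_near_cst; near=> s.
  have s0 : 0 < s by near: s; apply: nbhs_right_gt.
  have [s1|s1] := leP s 1; first by rewrite (C s 1).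
  by rewrite (C 1 s) // ltW.
have e01 : f 0 = f 1 by apply: (cvg_unique _ Hc lim1).
move=> t; rewrite le_eqVlt => /predU1P[<-//|t0].
have [t1|t1] := leP t 1; first by rewrite e01 (C t 1).
by rewrite e01 (C 1 t) // ltW.
Unshelve. all: by end_near.
Qed.

Lemma lift (R : realType) n m (G : 'M[R]_(n, m)) (Rf : 'cV[R]_n -> 'cV[R]_m)
  (sigma : 'cV[R]_n) (S : R -> 'cV[R]_n) (a : 'cV[R]_m) :
  loc_lipschitz_on (@vnonneg R n) Rf ->
  is_fwd_solution (fun s => G *m Rf s) (@vnonneg R n) S ->
  S 0 = sigma + G *m a ->
  exists x : R -> 'cV[R]_m,
    is_fwd_solution (fun x => Rf (sigma + G *m x))
       [set x | vnonneg (sigma + G *m x)] x /\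
    x 0 = a /\ (forall t, 0 <= t -> S t = sigma + G *m x t).
Proof.
move=> HL [SD [Sd Sc]] S0.
pose g j t := Rf (S t) j ord0.
have Scont : forall t, 0 < t -> forall i, {for t, continuous (fun s => S s i ord0)}.
  move=> t t0 i; apply/differentiable_continuous/derivable1_diffP.
  by case: (Sd t t0 i).
have gcont : forall t, 0 < t -> forall j, {for t, continuous (g j)}.
  move=> t t0 j.
  have N1 : \forall s \near t, vnonneg (S s).
    near=> s; apply: SD; apply: ltW; near: s; exact: lt_nbhsr.
  exact: (@Lip_comp R n m Rf R (nbhs t) _ S (S t) HL (SD t (ltW t0)) N1 (Scont t t0) j).
have gright : forall j, g j @ 0^'+ --> g j 0.
  move=> j.
  have N1 : \forall s \near 0^'+, vnonneg (S s).
    near=> s; apply: SD; apply: ltW; near: s; exact: nbhs_right_gt.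
  exact: (@Lip_comp R n m Rf R (0^'+) _ S (S 0) HL (SD 0 (lexx 0)) N1 Sc j).
have gint : forall j u, 0 < u ->
    (@lebesgue_measure R).-integrable `[0, u] (EFin \o g j).
  move=> j u u0; apply: continuous_compact_integrable; first exact: segment_compact.
  apply/continuous_within_itvP => //; split.
  - move=> t; rewrite in_itv /= => /andP[t0 _]; exact: gcont.
  - exact: gright.
  - apply: cvg_at_left_filter; exact: gcont.
pose I j t := parameterized_integral (@lebesgue_measure R) 0 t (g j).
pose x t := a + \col_j I j t.
have I0 : forall j, I j 0 = 0.
  by move=> j; rewrite /I /parameterized_integral set_itv1 Rintegral_set1.
have x0 : x 0 = a by apply/matrixP => i k; rewrite (ord1 k) !mxE I0 addr0.
have Id : forall j (t : R), 0 < t -> is_derive t (1:R) (I j) (g j t).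
  move=> j t t0.
  have tt1 : t < t + 1 by rewrite ltrDl.
  have [dF eF] := continuous_FTC1_closed tt1 (gint j (t + 1) (lt_trans t0 tt1)) t0 (gcont t t0 j).
  by have := derivableP dF; rewrite -derive1E eF.
have Iright : forall j, I j @ 0^'+ --> I j 0.
  move=> j; rewrite I0; apply: cvg_at_right_filter.
  exact: (parameterized_integral_cvg_left ltr01 (gint j 1 ltr01)).
have xE : forall s j, x s j ord0 = a j ord0 + I j s by move=> s j; rewrite !mxE.
have Heq : forall t, 0 <= t -> S t = sigma + G *m x t.
  move=> t t0; apply/matrixP => i k; rewrite (ord1 k) {k}.
  pose h s := sigma i ord0 + \sum_j G i j * (a j ord0 + I j s) - S s i ord0.
  have hE : forall s, h s = (sigma + G *m x s) i ord0 - S s i ord0.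
    by move=> s; rewrite /h !mxE; congr (_ + _ - _); apply: eq_bigr => j _; rewrite xE.
  have h0 : h 0 = 0 by rewrite hE x0 S0 subrr.
  suff : h t = h 0 by rewrite h0 hE => /eqP; rewrite subr_eq0 => /eqP.
  apply: const0 => //.
  - move=> s s0.
    have -> : h = cst (sigma i ord0) + \sum_j (fun s => G i j * (a j ord0 + I j s))
                   - (fun s => S s i ord0).
      by apply/funext => u; rewrite /h !fctE fct_sumE.
    have -> : (0 : R) = 0 + \sum_j G i j * g j s - (G *m Rf (S s)) i ord0.
      by rewrite add0r mxE subrr.
    apply: is_deriveB; last exact: Sd.
    apply: is_deriveD.
    apply: is_derive_sum => j.
    have D1 : is_derive s (1:R) (fun s1 => a j ord0 + I j s1) (g j s).
      rewrite -[g j s]add0r.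
      exact: (is_deriveD (is_derive_cst (a j ord0) s 1) (Id j s s0)).
    exact: (is_deriveZ (G i j) D1).
  - apply: cvgB; last exact: Sc.
    apply: cvgD; first exact: cvg_cst.
    apply: cvg_sumI => j.
    apply: cvgMl_tmp; apply: cvgD; first exact: cvg_cst.
    exact: Iright.
have xfun : forall j, (fun s => x s j ord0) = (fun s => a j ord0 + I j s).
  by move=> j; apply/funext => s; rewrite xE.
exists x; split; last by split.
split; [|split].
- by move=> t t0 /=; rewrite -Heq //; exact: SD.
- move=> t t0 j; rewrite -Heq ?ltW // xfun.
  have := is_deriveD (is_derive_cst (a j ord0) t 1) (Id j t t0).
  by rewrite add0r.
- move=> j; rewrite xfun xE.
  apply: cvgD; first exact: cvg_cst.
  exact: Iright.
Unshelve. all: by end_near.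
Qed.
Lemma proj_bound (R : realType) n k (G : 'M[R]_(n, k.+1)) (v : 'cV[R]_k.+1) :
  norm2sq v = 1 -> G *m v = 0 ->
  (forall x, G *m x = 0 -> exists c, x = c *: v) ->
  exists C, forall (w : 'cV[R]_k.+1) i,
    `|w i ord0 - (\sum_j v j ord0 * w j ord0) * v i ord0| <= C * norm1 (G *m w).
Proof.
move=> nv Gv Hk.
pose M := col_mx G v^T.
have vtv : v^T *m v = 1.
  apply/matrixP => i j; rewrite (ord1 i) (ord1 j) !mxE.
  rewrite -nv /norm2sq; apply: eq_bigr => l _; rewrite !mxE expr2 //.
have rf : row_free M^T.
  rewrite -kermx_eq0; apply/eqP/row_matrixP => i; rewrite row0.
  set u := row i (kermx M^T).
  have uA : u *m M^T = 0 by apply/sub_kermxP; exact: row_sub.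
  have Mu : M *m u^T = 0 by rewrite -[M]trmxK -trmx_mul uA trmx0.
  move: Mu; rewrite mul_col_mx => /eqP; rewrite col_mx_eq0 => /andP[/eqP g0 /eqP v0].
  have [c hc] := Hk _ g0.
  move: v0; rewrite hc -scalemxAr vtv => /matrixP/(_ ord0 ord0).
  rewrite !mxE /= mulr1 => c0.
  by rewrite -[u]trmxK hc c0 scale0r trmx0.
have [B AB] := row_freeP rf.
pose Lm := B^T.
have LM : Lm *m M = 1%:M.
  by rewrite /Lm -[M]trmxK -trmx_mul AB trmx1.
exists (\sum_i \sum_j `|Lm i j|) => w i.
set s := \sum_j v j ord0 * w j ord0.
pose w' := w - s *: v.
have e1 : w i ord0 - s * v i ord0 = w' i ord0 by rewrite !mxE.
have Gw' : G *m w' = G *m w by rewrite mulmxBr -scalemxAr Gv scaler0 subr0.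
have vw' : v^T *m w' = 0.
  rewrite mulmxBr -scalemxAr vtv; apply/matrixP => a b.
  rewrite (ord1 a) (ord1 b) !mxE /= mulr1; apply/eqP; rewrite subr_eq0; apply/eqP.
  by rewrite /s; apply: eq_bigr => j _; rewrite !mxE.
have ew : w' = Lm *m col_mx (G *m w) 0.
  by rewrite -Gw' -vw' -mul_col_mx mulmxA LM mul1mx.
rewrite e1 ew !mxE.
apply: (@le_trans _ _ (\sum_(j < n + 1) `|Lm i j| * norm1 (G *m w))).
  apply: le_trans (ler_norm_sum _ _ _) _.
  apply: ler_sum => j _; rewrite normrM ler_wpM2l //.
  rewrite -(@fintype.splitK n 1 j); case: (fintype.split j) => a /=.
    rewrite col_mxEu; apply: (@le_sum1 _ _ (fun l => `|(G *m w) l ord0|)).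
    by move=> l.
  by rewrite col_mxEd mxE normr0 /norm1 sumr_ge0.
rewrite -mulr_suml ler_wpM2r ?sumr_ge0 //.
by apply: (@le_sum1 _ _ (fun l => \sum_j `|Lm l j|)) => l; rewrite sumr_ge0.
Qed.

Lemma vmin_ex (R : realType) k (v : 'cV[R]_k.+1) :
  (forall i, 0 < v i ord0) -> exists vm, 0 < vm /\ forall i, vm <= v i ord0.
Proof.
move=> vpos; exists (v (Order.arg_min ord0 xpredT (fun i => v i ord0)) ord0).
split; first exact: vpos.
by move=> i; case: arg_minP => // j _ /(_ i isT).
Qed.

Lemma norm1_suble (R : realType) k (a b : 'cV[R]_k) :
  norm1 (a - b) <= norm1 a + norm1 b.
Proof.
rewrite /norm1 -big_split /=; apply: ler_sum => i _; rewrite !mxE.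
exact: ler_normB.
Qed.

Lemma mul_entry_bound (R : realType) n m (G : 'M[R]_(n, m)) (d : 'cV[R]_m) e i :
  (forall j, `|d j ord0| <= e) -> `|(G *m d) i ord0| <= (\sum_j `|G i j|) * e.
Proof.
move=> H; rewrite mxE; apply: le_trans (ler_norm_sum _ _ _) _.
rewrite mulr_suml; apply: ler_sum => j _; rewrite normrM ler_wpM2l //.
Qed.

Lemma W_Gbound (R : realType) n k (G : 'M[R]_(n, k.+1)) (v d : 'cV[R]_k.+1) e i :
  G *m v = 0 -> (forall j, 0 < v j ord0) -> W v d e -> 0 <= e ->
  `|(G *m d) i ord0| <= (\sum_j `|G i j|) * (e * \sum_j v j ord0).
Proof.
move=> Gv vpos [c H] e0.
have -> : G *m d = G *m (d - c *: v) by rewrite mulmxBr -scalemxAr Gv scaler0 subr0.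
apply: mul_entry_bound => j; rewrite !mxE.
have /andP[h1 h2] := H j.
have vj : v j ord0 <= \sum_l v l ord0.
  by apply: (@le_sum1 _ _ (fun l => v l ord0)) => l; apply: ltW.
rewrite ger0_norm; last by rewrite subr_ge0.
apply: (@le_trans _ _ (e * v j ord0)); first by move: h2; rewrite mulrDl; lra.
by rewrite ler_wpM2l.
Qed.

Lemma key (R : realType) n k (Gamma : 'M[R]_(n, k.+1))
  (Rf : 'cV[R]_n -> 'cV[R]_k.+1) (v : 'cV[R]_k.+1) (sigma : 'cV[R]_n) :
  loc_lipschitz_on (@vnonneg R n) Rf ->
  (forall rho : 'cV[R]_n, vnonneg rho ->
     exists S : R -> 'cV[R]_n,
       is_fwd_solution (fun s => Gamma *m Rf s) (@vnonneg R n) S /\ S 0 = rho) ->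
  (forall i, 0 < v i ord0) -> norm2sq v = 1 -> Gamma *m v = 0 ->
  (forall x, Gamma *m x = 0 -> exists c, x = c *: v) ->
  (forall S : R -> 'cV[R]_n,
     is_fwd_solution (fun s => Gamma *m Rf s) (@vnonneg R n) S ->
     exists M : R, forall t : R, 0 <= t -> norm1 (S t) <= M) ->
  (forall x1 x2 : R -> 'cV[R]_k.+1,
     is_fwd_solution (fun x => Rf (sigma + Gamma *m x))
       [set x | vnonneg (sigma + Gamma *m x)] x1 ->
     is_fwd_solution (fun x => Rf (sigma + Gamma *m x))
       [set x | vnonneg (sigma + Gamma *m x)] x2 ->
     vnonneg (x1 0 - x2 0) -> x1 0 <> x2 0 ->
     forall t : R, 0 < t -> forall i, x2 t i ord0 < x1 t i ord0) ->
  forall (S : R -> 'cV[R]_n) (a : 'cV[R]_k.+1),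
  is_fwd_solution (fun s => Gamma *m Rf s) (@vnonneg R n) S ->
  S 0 = sigma + Gamma *m a ->
  exists q (y : R -> 'cV[R]_k.+1), vnonneg (sigma + Gamma *m q) /\
    is_fwd_solution (fun x => Rf (sigma + Gamma *m x))
       [set x | vnonneg (sigma + Gamma *m x)] y /\ y 0 = q /\
    (forall h, 0 <= h -> exists lam, y h = q + lam *: v) /\
    (forall i, (fun t => S t i ord0) @ +oo --> (sigma + Gamma *m q) i ord0).
Proof.
move=> HL Hc vpos nv Gv kerP Hb Hm S a sS S0.
have GvE : forall x c, Gamma *m (x + c *: v) = Gamma *m x.
  by move=> x c; rewrite mulmxDr -scalemxAr Gv scaler0 addr0.
have HFv : forall x c, (fun x => Rf (sigma + Gamma *m x)) (x + c *: v) =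
                       (fun x => Rf (sigma + Gamma *m x)) x.
  by move=> x c /=; rewrite GvE.
have HDv : forall x c, [set x | vnonneg (sigma + Gamma *m x)] x ->
                       [set x | vnonneg (sigma + Gamma *m x)] (x + c *: v).
  by move=> x c /=; rewrite GvE.
have [x [sx [x0 Sx]]] := lift HL sS S0.
have [M HM] := Hb S sS.
have [C HC] := proj_bound nv Gv kerP.
pose z t := x t - (\sum_j v j ord0 * x t j ord0) *: v.
have GzE : forall t, Gamma *m z t = Gamma *m x t.
  by move=> t; rewrite /z mulmxBr -scalemxAr Gv scaler0 subr0.
have zb : forall t, 0 <= t -> forall i, `|z t i ord0| <= `|C| * (M + norm1 sigma).
  move=> t t0 i; have := HC (x t) i; rewrite /z !mxE => h; apply: (le_trans h).
  have N0 := norm1_ge0 (Gamma *m x t).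
  apply: (@le_trans _ _ (`|C| * norm1 (Gamma *m x t))).
    by rewrite ler_wpM2r // ler_norm.
  rewrite ler_wpM2l //.
  have -> : Gamma *m x t = S t - sigma by rewrite Sx // addrC addKr.
  by apply: (le_trans (norm1_suble _ _)); rewrite lerD2r HM.
have [q0 Hq0] := cluster_ex zb.
have [vm [vm0 vmle]] := vmin_ex vpos.
have cl : clusterW v x q0.
  move=> e e0 T.
  have e'0 : 0 < e / 2 * vm by rewrite mulr_gt0 // divr_gt0.
  have [t [tT [t0 Ht]]] := Hq0 (e / 2 * vm) e'0 T.
  exists t; split=> //; split=> //.
  have -> : x t - q0 = (z t - q0) + (\sum_j v j ord0 * x t j ord0) *: v.
    by rewrite /z addrAC subrK.
  apply: W_shift; exists (- (e / 2)) => i; rewrite !mxE.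
  have := Ht i; rewrite ltr_norml => /andP[h1 h2].
  have hv : e / 2 * vm <= e / 2 * v i ord0.
    by rewrite ler_wpM2l // divr_ge0 // ltW.
  rewrite /z !mxE in h1 h2.
  apply/andP; split; lra.
have qD : vnonneg (sigma + Gamma *m q0).
  move=> i; rewrite leNgt; apply/negP => neg.
  pose A := \sum_j `|Gamma i j|.
  have A0 : 0 <= A by rewrite sumr_ge0.
  pose e := - (sigma + Gamma *m q0) i ord0 / (A + 1).
  have e0 : 0 < e by rewrite divr_gt0 ?oppr_gt0 // ltr_wpDl.
  have [t [_ [t0 Ht]]] := Hq0 e e0 0.
  have St := sS.1 t t0 i.
  have Sz : S t = (sigma + Gamma *m q0) + Gamma *m (z t - q0).
    by rewrite (mulmxBr Gamma (z t) q0) addrA addrAC addrK GzE Sx.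
  have bd := @mul_entry_bound R n k.+1 Gamma (z t - q0) e i.
  have : `|(Gamma *m (z t - q0)) i ord0| <= A * e.
    by apply: bd => j; move: (Ht j); rewrite /z !mxE; apply: ltW.
  move: St; rewrite Sz mxE => St.
  rewrite ler_norml => /andP[_ h2].
  have : A * e < (A + 1) * e by rewrite ltr_pM2r // ltrDl.
  have eq : (A + 1) * e = - (sigma + Gamma *m q0) i ord0.
    by rewrite /e [X in X = _]mulrC divfK // gt_eqF // ltr_wpDl.
  lra.
have [S' [sS' S'0]] := Hc _ qD.
have [y [sy [y0 _]]] := lift HL sS' S'0.
have tr := travel vpos HFv HDv Hm sx sy y0 cl.
have cv := conv vpos HFv HDv Hm sx sy y0 cl tr.
exists q0, y; split => //; split => //; split => //; split => // i.
apply/cvgrPdist_le => e e0.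
pose A := \sum_j `|Gamma i j|.
have A0 : 0 <= A by rewrite sumr_ge0.
pose V := \sum_j v j ord0.
have V0 : 0 <= V by rewrite sumr_ge0 // => j _; apply: ltW.
pose e' := e / ((A + 1) * (V + 1)).
have e'0 : 0 < e' by rewrite divr_gt0 // mulr_gt0 // ltr_wpDl.
have [T HT] := cv e' e'0.
near=> t.
have tT : T <= t by near: t; apply: nbhs_pinfty_ge; rewrite num_real.
have t0 : 0 <= t by near: t; apply: nbhs_pinfty_ge; rewrite num_real.
have E : S t - (sigma + Gamma *m q0) = Gamma *m (x t - q0).
  by rewrite Sx // mulmxBr opprD addrACA subrr add0r.
have E2 : S t i ord0 - (sigma + Gamma *m q0) i ord0 =
          (S t - (sigma + Gamma *m q0)) i ord0 by rewrite !mxE.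
rewrite distrC E2 E.
apply: (le_trans (W_Gbound i Gv vpos (HT t tT) (ltW e'0))).
rewrite -/A -/V.
have : e' * V <= e' * (V + 1) by apply: ler_wpM2l; [exact: ltW| rewrite lerDl].
have : e' * ((A + 1) * (V + 1)) = e by rewrite /e' divfK // gt_eqF // mulr_gt0 // ltr_wpDl.
nra.
Unshelve. all: by end_near.
Qed.
Unset Implicit Arguments.
Set Strict Implicit.

Theorem corollary3 (R : realType) (n m : nat)
  (Gamma : 'M[R]_(n, m)) (Rf : 'cV[R]_n -> 'cV[R]_m)
  (* R locally Lipschitz on the nonnegative orthant *)
  (HLip : loc_lipschitz_on (@vnonneg R n) Rf)
  (* S' = Gamma R(S) leaves the orthant invariant and is forward complete *)
  (Hcomplete : forall rho : 'cV[R]_n, vnonneg rho ->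
     exists S : R -> 'cV[R]_n,
       is_fwd_solution (fun s => Gamma *m Rf s) (@vnonneg R n) S /\ S 0 = rho)
  (* (1) rank m-1, kernel spanned by a positive unit vector *)
  (Hrank : \rank Gamma = m.-1)
  (Hker : exists v : 'cV[R]_m,
     (forall i : 'I_m, 0 < v i ord0) /\ norm2sq v = 1 /\
     (forall x : 'cV[R]_m, Gamma *m x = 0 <-> exists c : R, x = c *: v))
  (* (2) all solutions in the orthant are bounded *)
  (Hbounded : forall S : R -> 'cV[R]_n,
     is_fwd_solution (fun s => Gamma *m Rf s) (@vnonneg R n) S ->
     exists M : R, forall t : R, 0 <= t -> norm1 (S t) <= M)
  (sigma : 'cV[R]_n) (Hsigma : vnonneg sigma)
  (* (3) x' = f_sigma(x) = R(sigma + Gamma x) on X_sigma is strongly monotone *)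
  (Hmono : forall x1 x2 : R -> 'cV[R]_m,
     is_fwd_solution (fun x => Rf (sigma + Gamma *m x))
       [set x | vnonneg (sigma + Gamma *m x)] x1 ->
     is_fwd_solution (fun x => Rf (sigma + Gamma *m x))
       [set x | vnonneg (sigma + Gamma *m x)] x2 ->
     vnonneg (x1 0 - x2 0) -> x1 0 <> x2 0 ->
     forall t : R, 0 < t -> forall i : 'I_m, x2 t i ord0 < x1 t i ord0) :
  exists zeta : 'cV[R]_n, vnonneg zeta /\
    forall rho : 'cV[R]_n, vnonneg rho ->
      (exists y : 'cV[R]_m, rho - sigma = Gamma *m y) ->
      forall S : R -> 'cV[R]_n,
        is_fwd_solution (fun s => Gamma *m Rf s) (@vnonneg R n) S -> S 0 = rho ->
        forall i : 'I_n, (fun t : R => S t i ord0) @ +oo --> zeta i ord0.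
Proof.
case: m Gamma Rf HLip Hcomplete Hrank Hker Hbounded Hmono =>
  [|k] Gamma Rf HLip Hcomplete Hrank Hker Hbounded Hmono.
  case: Hker => v [_ [nv _]]; move: nv; rewrite /norm2sq big_ord0 => /eqP.
  by rewrite eq_sym oner_eq0.
have [v [vpos [nv kerP]]] := Hker.
have Gv : Gamma *m v = 0 by apply/kerP; exists 1; rewrite scale1r.
have kerP' : forall x, Gamma *m x = 0 -> exists c, x = c *: v.
  by move=> x h; apply/kerP.
have GvE : forall x c, Gamma *m (x + c *: v) = Gamma *m x.
  by move=> x c; rewrite mulmxDr -scalemxAr Gv scaler0 addr0.
have HFv : forall x c, (fun x => Rf (sigma + Gamma *m x)) (x + c *: v) =
                       (fun x => Rf (sigma + Gamma *m x)) x.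
  by move=> x c /=; rewrite GvE.
have HDv : forall x c, [set x | vnonneg (sigma + Gamma *m x)] x ->
                       [set x | vnonneg (sigma + Gamma *m x)] (x + c *: v).
  by move=> x c /=; rewrite GvE.
have [S0 [sS0 S00]] := Hcomplete sigma Hsigma.
have S00' : S0 0 = sigma + Gamma *m 0 by rewrite mulmx0 addr0.
have [q [y [qD [sy [y0 [try _]]]]]] :=
  key HLip Hcomplete vpos nv Gv kerP' Hbounded Hmono sS0 S00'.
exists (sigma + Gamma *m q); split => // rho rhoD [a ha] S sS Srho i.
have Sa : S 0 = sigma + Gamma *m a by rewrite Srho -ha addrC subrK.
have [q' [y' [_ [sy' [y0' [try' cvS]]]]]] :=
  key HLip Hcomplete vpos nv Gv kerP' Hbounded Hmono sS Sa.
have [c hc] := same_class vpos HFv HDv Hmono sy sy' y0 y0' (try 1 ler01) (try' 1 ler01).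
have -> : Gamma *m q = Gamma *m q'.
  by rewrite -(subrK q' q) hc addrC GvE.
exact: cvS.
Qed.
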